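(* Let $L\subseteq Q$ be a dense extension of Lie algebras. Then $[L,L]\subseteq [Q,Q]$ is also a dense extension.
   Context: Lie algebras over a commutative unital ring $\Phi$; $[L,L]$ is the span of brackets of elements of $L$. For a Lie algebra $Q$, $M(Q)$ is the subalgebra of $\mathrm{End}_\Phi(Q)$ generated by the identity and all $\mathrm{ad}_x$, $x\in Q$, where $\mathrm{ad}_x(y)=[x,y]$. An extension $L\subseteq Q$ (i.e. $L$ a subalgebra of $Q$) is dense if the only $\mu\in M(Q)$ with $\mu(L)=0$ is $\mu=0$. *)

(* Defs.v *)
From mathcomp Require Import all_boot all_order all_algebra.
Set Implicit Arguments. Unset Strict Implicit. Unset Printing Implicit Defensive.
Import GRing.Theory.
Local Open Scope ring_scope.

Section Lie.
Variables (Phi : comPzRingType) (Q : lmodType Phi).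

Record is_lie_bracket (br : Q -> Q -> Q) : Prop := IsLieBracket {
  lie_addl : forall x y z, br (x + y) z = br x z + br y z;
  lie_addr : forall x y z, br x (y + z) = br x y + br x z;
  lie_scalel : forall (a : Phi) x y, br (a *: x) y = a *: br x y;
  lie_scaler : forall (a : Phi) x y, br x (a *: y) = a *: br x y;
  lie_alt : forall x, br x x = 0;
  lie_jacobi : forall x y z, br x (br y z) + br y (br z x) + br z (br x y) = 0
}.

Variable br : Q -> Q -> Q.

Record is_subalgebra (L : Q -> Prop) : Prop := IsSubalgebra {
  sub0 : L 0;
  subD : forall x y, L x -> L y -> L (x + y);
  subZ : forall (a : Phi) x, L x -> L (a *: x);
  subBr : forall x y, L x -> L y -> L (br x y)
}.

Inductive derived (L : Q -> Prop) : Q -> Prop :=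
  | derived0 : derived L 0
  | derived_br : forall x y, L x -> L y -> derived L (br x y)
  | derivedD : forall u v, derived L u -> derived L v -> derived L (u + v)
  | derivedZ : forall (a : Phi) u, derived L u -> derived L (a *: u).

Definition ad (x : Q) : Q -> Q := fun y => br x y.

(* For a subalgebra P of Q, the maps Q -> Q in the unital subalgebra of
   End_Phi(Q) generated by id and the ad_x, x in P. Their restrictions to P
   (which is ad-invariant) are exactly the elements of M(P) <= End_Phi(P);
   for P = Q this is literally M(Q). *)
Inductive Malg (P : Q -> Prop) : (Q -> Q) -> Prop :=
  | Malg_id : Malg P (fun y => y)
  | Malg_ad : forall x, P x -> Malg P (ad x)
  | Malg_add : forall f g, Malg P f -> Malg P g -> Malg P (fun y => f y + g y)
  | Malg_scale : forall (a : Phi) f, Malg P f -> Malg P (fun y => a *: f y)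
  | Malg_comp : forall f g, Malg P f -> Malg P g -> Malg P (fun y => f (g y)).

Definition dense_ext (P L : Q -> Prop) : Prop :=
  forall mu, Malg P mu -> (forall y, L y -> mu y = 0) ->
    forall y, P y -> mu y = 0.

End Lie.

(* Main.v *)
Require Import Defs.
From mathcomp Require Import all_boot all_order all_algebra.
Local Open Scope ring_scope.
Import GRing.Theory.

Lemma Malg_lin (Phi : comPzRingType) (Q : lmodType Phi)
  (br : Q -> Q -> Q) (P : Q -> Prop) mu :
  is_lie_bracket br -> Malg br P mu ->
  (forall a b, mu (a + b) = mu a + mu b) /\ (forall (c : Phi) a, mu (c *: a) = c *: mu a).
Proof.
move=> HB; elim => [|x _|f g _ [f1 f2] _ [g1 g2]|c f _ [f1 f2]|f g _ [f1 f2] _ [g1 g2]].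
- by split.
- by split=> *; rewrite /ad ?(lie_addr HB) ?(lie_scaler HB).
- split=> *; first by rewrite f1 g1 addrACA.
  by rewrite f2 g2 scalerDr.
- split=> *; first by rewrite f1 scalerDr.
  by rewrite f2 !scalerA mulrC.
- by split=> *; rewrite ?g1 ?f1 ?g2 ?f2.
Qed.

Lemma Malg_mono (Phi : comPzRingType) (Q : lmodType Phi)
  (br : Q -> Q -> Q) (P : Q -> Prop) mu :
  Malg br P mu -> Malg br (fun _ => True) mu.
Proof.
elim=> *; [exact: Malg_id|exact: Malg_ad|exact: Malg_add|exact: Malg_scale|exact: Malg_comp].
Qed.

Theorem mainTheorem12 (Phi : comPzRingType) (Q : lmodType Phi)
  (br : Q -> Q -> Q) (L : Q -> Prop) :
  is_lie_bracket br ->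
  is_subalgebra br L ->
  dense_ext br (fun _ => True) L ->
  (forall x, derived br L x -> derived br (fun _ => True) x) /\
  dense_ext br (derived br (fun _ => True)) (derived br L).
Proof.
move=> HB HL HD; split.
  move=> x; elim=> *; [exact: derived0|exact: derived_br|exact: derivedD|exact: derivedZ].
move=> mu Hmu H0.
have HmuT := @Malg_mono _ _ _ _ _ Hmu.
have [m1 m2] := @Malg_lin _ _ _ _ _ HB Hmu.
have m0 : mu 0 = 0.
  have := m2 0 0. rewrite !scale0r. done.
have anti : forall x y, br y x = - br x y.
  move=> x y; apply/eqP; rewrite -subr_eq0 opprK.
  have := lie_alt HB (x + y).
  rewrite (lie_addl HB) !(lie_addr HB) !(lie_alt HB) add0r addr0.
  by rewrite addrC => ->.
have step1 : forall x q, L x -> mu (br x q) = 0.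
  move=> x q Lx.
  have := HD (fun y => mu (ad br x y)) (Malg_comp HmuT (Malg_ad _ I)).
  apply=> // y Ly; apply: H0; exact: derived_br.
have step2 : forall q p, mu (br q p) = 0.
  move=> q p.
  have := HD (fun y => mu (ad br q y)) (Malg_comp HmuT (Malg_ad _ I)).
  apply=> // y Ly; rewrite /ad anti.
  by rewrite -scaleN1r m2 step1 // scaler0.
move=> z; elim=> [|x y _ _|u v _ Hu _ Hv|a u _ Hu].
- exact: m0.
- exact: step2.
- by rewrite m1 Hu Hv addr0.
- by rewrite m2 Hu scaler0.
Qed.
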